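(* Let $T$ be a tournament, let $v\in V(T)$ and let $c\in\mathbb{N}$ with $c\ge 2$. Suppose that $d^-_T(v)\ge 2^{c-1}$. Then there exist disjoint sets $A,E\subseteq V(T)$ and a vertex $a\in A$ such that: (i) $2\le |A|\le c$ and $T[A]$ is a transitive tournament with source $a$ and sink $v$; (ii) $A\setminus\{a\}$ out-dominates $V(T)\setminus(A\cup E)$; (iii) $|E|\le (1/2)^{c-2} d^-_T(v)$.
   Context: $d^-_T(v)$ is the in-degree of $v$ in $T$. A tournament is transitive if its vertices can be enumerated $v_1,\dots,v_m$ so that $v_iv_j$ is an edge iff $i<j$; then $v_1$ is its source and $v_m$ its sink. A set $A$ out-dominates a set $B$ if for every $b\in B$ there is $a'\in A$ with $a'b\in E(T)$. *)

(* Defs.v *)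
From mathcomp Require Import all_boot.
Set Implicit Arguments. Unset Strict Implicit. Unset Printing Implicit Defensive.

Definition tournament (V : finType) (E : rel V) : Prop :=
  (forall x, ~~ E x x) /\
  (forall x y, x != y -> (E x y && ~~ E y x) || (E y x && ~~ E x y)).

Definition indeg (V : finType) (E : rel V) (v : V) : nat := #|[set u | E u v]|.

Definition transitive_src_sink (V : finType) (E : rel V) (A : {set V}) (a b : V) : Prop :=
  exists s : seq V,
    [/\ uniq s, A =i s, head a s = a, last a s = b &
        forall i j, i < size s -> j < size s ->
          E (nth a s i) (nth a s j) = (i < j)].

Definition out_dominates (V : finType) (E : rel V) (X Y : {set V}) : Prop :=
  forall y, y \in Y -> exists2 x, x \in X & E x y.

(* Main.v *)
Require Import Defs.
From mathcomp Require Import all_boot zify.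
Set Implicit Arguments. Unset Strict Implicit. Unset Printing Implicit Defensive.

Lemma tour_asym (V : finType) (E : rel V) x y : tournament E -> E x y -> ~~ E y x.
Proof.
case=> irr tot Exy; have [->|nxy] := eqVneq x y; first by rewrite (negbTE (irr y)).
by case/orP: (tot x y nxy) => /andP[] // _; rewrite Exy.
Qed.

Lemma tour_tot (V : finType) (E : rel V) x y : tournament E -> x != y -> ~~ E x y -> E y x.
Proof. by case=> irr tot nxy nE; case/orP: (tot x y nxy) => /andP[] //; rewrite (negbTE nE). Qed.

Lemma tour_sum (V : finType) (E : rel V) x y : tournament E -> (E x y : nat) + E y x = (x != y).
Proof.
move=> hT; have [->|nxy] := eqVneq x y; first by case: hT => irr _; rewrite (negbTE (irr y)).
case: hT => irr tot; by case/orP: (tot x y nxy) => /andP[-> /negbTE ->].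
Qed.

Lemma card_in_sum (V : finType) (W : {set V}) (P : pred V) :
  #|[set x in W | P x]| = \sum_(x in W) (P x : nat).
Proof.
rewrite -sum1_card (eq_bigl (fun x => (x \in W) && P x)); last by move=> x; rewrite inE.
rewrite big_mkcondr /=; apply: eq_bigr => x _; by case: (P x).
Qed.

Lemma avg (V : finType) (E : rel V) (W : {set V}) : tournament E -> 0 < #|W| ->
  exists2 w, w \in W & #|[set x in W | E x w]| * 2 <= #|W| - 1.
Proof.
move=> hT W0.
have S2 : \sum_(w in W) #|[set x in W | E x w]| * 2 = #|W| * (#|W| - 1).
  rewrite -big_distrl /= muln2 -addnn.
  have -> : \sum_(w in W) #|[set x in W | E x w]| = \sum_(w in W) \sum_(x in W) (E x w : nat).
    by apply: eq_bigr => w _; rewrite card_in_sum.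
  rewrite {2}exchange_big -big_split /=.
  rewrite (eq_bigr (fun _ => #|W| - 1)) ?sum_nat_const //.
  move=> w wW; rewrite -big_split /=.
  rewrite (eq_bigr (fun x => (x != w) : nat)); last by move=> x _; rewrite tour_sum.
  rewrite -(card_in_sum W (fun x => x != w)).
  have -> : [set x in W | x != w] = W :\ w by apply/setP => x; rewrite !inE andbC.
  by rewrite (cardsD1 w W) wW /= add1n subn1.
case: (boolP [exists w in W, #|[set x in W | E x w]| * 2 <= #|W| - 1]) => [/exists_inP[w wW Hw]|]; first by exists w.
rewrite negb_exists_in => /forall_inP H.
have : \sum_(w in W) #|W| <= \sum_(w in W) #|[set x in W | E x w]| * 2.
  by apply: leq_sum => w /H; rewrite -ltnNge; case: #|W| W0 => // n _; rewrite subn1.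
rewrite S2 sum_nat_const leq_mul2l; case: #|W| W0 => // n _.
by rewrite subn1 ltnn.
Qed.

Definition Uset (V : finType) (E : rel V) (s : seq V) : {set V} := [set u | all (E u) s].
Definition chain (V : finType) (E : rel V) (v : V) (s : seq V) : Prop :=
  uniq s /\ forall i j, i < size s -> j < size s -> E (nth v s i) (nth v s j) = (i < j).

Lemma notin_U (V : finType) (E : rel V) s w : tournament E -> w \in Uset E s -> w \notin s.
Proof.
case=> irr _; rewrite inE => /allP H; apply/negP => /H; by rewrite (negbTE (irr w)).
Qed.

Lemma chain_cons (V : finType) (E : rel V) v s w : tournament E -> chain E v s ->
  w \in Uset E s -> chain E v (w :: s).
Proof.
move=> hT [us hs] wU; split; first by rewrite /= us (notin_U hT wU).
move: (wU); rewrite inE => /allP H.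
case=> [|i] [|j] //= Hi Hj.
- by case: hT => irr _; apply/negbTE.
- by apply: H; apply: mem_nth.
- apply/negbTE; apply: tour_asym => //; apply: H; exact: mem_nth.
- by rewrite hs.
Qed.

Lemma find_w (V : finType) (E : rel V) (W : {set V}) : tournament E -> 1 < #|W| ->
  exists2 w, w \in W & 0 < #|[set x in W | E x w]| /\ #|[set x in W | E x w]| * 2 <= #|W|.
Proof.
move=> hT W2.
case: (boolP [exists z in W, #|[set x in W | E x z]| == 0]).
- case/exists_inP => z zW /eqP /cards0_eq Hz.
  have cW' : #|W :\ z| = #|W| - 1 by rewrite (cardsD1 z W) zW add1n subn1.
  have [w] := @avg _ E (W :\ z) hT ltac:(by rewrite cW' subn_gt0).
  rewrite !inE => /andP[wz wW] Hw.
  have Ezw : E z w.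
    apply: (tour_tot hT wz).
    apply/negP => Ewz; have : w \in [set x in W | E x z] by rewrite inE wW Ewz.
    by rewrite Hz inE.
  exists w => //.
  have -> : [set x in W | E x w] = z |: [set x in W :\ z | E x w].
    apply/setP => x; rewrite !inE; have [->|xz] := eqVneq x z; first by rewrite zW Ezw.
    by [].
  rewrite cardsU1 !inE eqxx /= add1n; split => //.
  rewrite cW' in Hw; lia.
- rewrite negb_exists_in => /forall_inP H.
  have [w wW Hw] := @avg _ E W hT ltac:(by case: #|W| W2).
  exists w => //; split; first by rewrite lt0n; apply: H.
  by apply: leq_trans Hw (leq_subr _ _).
Qed.

Lemma finish (V : finType) (E : rel V) (v : V) (c : nat) s a :
  tournament E -> chain E v s -> last v s = v -> 0 < size s -> size s < c ->
  a \in Uset E s -> #|Uset E s :\ a| * 2 ^ (c - 2) <= indeg E v ->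
  exists (A Ex : {set V}) (a : V),
    [/\ [disjoint A & Ex], a \in A,
        2 <= #|A| <= c /\ transitive_src_sink E A a v,
        out_dominates E (A :\ a) (~: (A :|: Ex)) &
        #|Ex| * 2 ^ (c - 2) <= indeg E v].
Proof.
move=> hT ch ls s0 sc aU bnd.
have [uas has] := chain_cons hT ch aU.
have ans := notin_U hT aU.
exists [set x in a :: s], (Uset E s :\ a), a; split => //.
- rewrite disjoint_subset; apply/subsetP => x; rewrite !inE => /orP[/eqP->|xs].
    by rewrite eqxx.
  apply/negP => /andP[_] /allP/(_ x xs).
  by case: hT => irr _; rewrite (negbTE (irr x)).
- by rewrite inE mem_head.
- split; first by rewrite cardsE (card_uniqP uas) /=; apply/andP; split.
  exists (a :: s); split => //.
  + by move=> x; rewrite !inE.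
  + by case: s s0 ls {ch has uas ans aU bnd sc} => //= b s _ <-; case: s.
  + move=> i j Hi Hj; rewrite (set_nth_default v a Hi) (set_nth_default v a Hj).
    exact: has.
- move=> y; rewrite !inE negb_or => /andP[yA].
  have ya : y != a by apply: contra yA => ->.
  rewrite ya /= => /allPn[b bs nEyb].
  exists b.
    rewrite !inE bs orbT andbT; by apply: contra ans => /eqP<-.
  apply: (tour_tot hT) nEyb; by apply: contra yA => /eqP->; rewrite bs orbT.
Qed.

Lemma grow (V : finType) (E : rel V) (v : V) (c : nat) n : tournament E ->
  forall s, size s + n = c - 1 -> chain E v s -> last v s = v -> 0 < size s ->
  0 < #|Uset E s| -> #|Uset E s| * 2 ^ (size s - 1) <= indeg E v ->
  exists (A Ex : {set V}) (a : V),
    [/\ [disjoint A & Ex], a \in A,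
        2 <= #|A| <= c /\ transitive_src_sink E A a v,
        out_dominates E (A :\ a) (~: (A :|: Ex)) &
        #|Ex| * 2 ^ (c - 2) <= indeg E v].
Proof.
move=> hT; elim: n => [|n IH] s hs ch ls s0 U0 bnd.
  have [a aU] : exists a, a \in Uset E s by apply/set0Pn; rewrite -card_gt0.
  apply: (finish hT ch ls s0 _ aU); first by lia.
  have -> : c - 2 = size s - 1 by lia.
  apply: leq_trans bnd; rewrite leq_mul2r; apply/orP; right.
  by rewrite (cardsD1 a (Uset E s)) aU.
have [a aU] : exists a, a \in Uset E s by apply/set0Pn; rewrite -card_gt0.
have [U1|U2] := eqVneq #|Uset E s| 1.
  apply: (finish hT ch ls s0 _ aU); first by lia.
  have : #|Uset E s| = 1 + #|Uset E s :\ a| by rewrite (cardsD1 a (Uset E s)) aU.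
  by rewrite U1 => H; have -> : #|Uset E s :\ a| = 0 by lia.
have U2' : 1 < #|Uset E s| by rewrite ltn_neqAle eq_sym U2.
have [w wU [k0 k2]] := find_w hT U2'.
have eU : [set x in Uset E s | E x w] = Uset E (w :: s).
  by apply/setP => x; rewrite !inE /= andbC.
rewrite eU in k0 k2.
apply: (IH (w :: s)) => //=.
- by rewrite addSnnS.
- exact: chain_cons.
- by case: s s0 ls {ch hs bnd U0 U2 U2' aU wU eU k0 k2 IH}.
- rewrite subn1 /=.
  have -> : size s = (size s - 1).+1 by lia.
  rewrite expnS mulnA; apply: leq_trans bnd; by rewrite leq_mul2r k2 orbT.
Qed.

Theorem lemma2p3 (V : finType) (E : rel V) (v : V) (c : nat) :
  tournament E -> 2 <= c -> 2 ^ (c - 1) <= indeg E v ->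
  exists (A Ex : {set V}) (a : V),
    [/\ [disjoint A & Ex], a \in A,
        2 <= #|A| <= c /\ transitive_src_sink E A a v,
        out_dominates E (A :\ a) (~: (A :|: Ex)) &
        #|Ex| * 2 ^ (c - 2) <= indeg E v].
Proof.
move=> hT c2 hd.
have eU : Uset E [:: v] = [set u | E u v] by apply/setP => u; rewrite !inE /= andbT.
apply: (@grow _ E v c (c - 2) hT [:: v]) => //=.
- by lia.
- split => //= [[|i]] [|j] //=; case: hT => irr _ _ _; exact/negbTE.
- rewrite eU -/(indeg E v); apply: leq_trans hd; by rewrite expn_gt0.
- by rewrite eU -/(indeg E v) muln1.
Qed.
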